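(* Let $S$ be a Boolean inverse monoid satisfying condition (H). Then for all $s,t\in S$, $s^*e_{st}s=e_{ts}$.
   Context: An inverse semigroup is a semigroup $S$ in which every $s$ has a unique $s^*$ with $ss^*s=s$, $s^*ss^*=s^*$; assumed countable with a zero. $E(S)$ is its set of idempotents. A Boolean inverse monoid is an inverse monoid in which every finite compatible set (pairwise $s^*t,st^*\in E(S)$) has a join, multiplication distributes over such joins, and $E(S)$ is a Boolean algebra. For $Z\subseteq W\subseteq E(S)$, $Z$ is a cover of $W$ if every nonzero $w\in W$ has some $z\in Z$ with $zw\ne0$. For $s\in S$ let $\mathcal J_s=\{e\in E(S): se=e\}$. Condition (H): each $\mathcal J_s$ admits a finite cover $C\subseteq\mathcal J_s$. Under (H), $e_s$ denotes $\bigvee_{c\in C}c$ for a finite cover $C$ of $\mathcal J_s$; this is independent of $C$, and $\mathcal J_s=\{e: e\le e_s\}$. *)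

(* Defs.v *)
From Stdlib Require Import List.
Import ListNotations.

Section BIM.
Context {T : Type}.
Variable mul : T -> T -> T.
Variable star : T -> T.
Variables one zero : T.

Definition idem (e : T) : Prop := mul e e = e.

Definition nat_le (s t : T) : Prop := s = mul t (mul (star s) s).

Definition compatible (s t : T) : Prop :=
  idem (mul (star s) t) /\ idem (mul s (star t)).

Definition compatible_list (A : list T) : Prop :=
  forall a b, In a A -> In b A -> compatible a b.

Definition is_join (A : list T) (j : T) : Prop :=
  (forall a, In a A -> nat_le a j) /\
  (forall u, (forall a, In a A -> nat_le a u) -> nat_le j u).

Definition inverse_monoid_with_zero : Prop :=
  (forall a b c, mul a (mul b c) = mul (mul a b) c) /\
  (forall s, mul s (mul (star s) s) = s /\ mul (star s) (mul s (star s)) = star s) /\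
  (forall s x, mul s (mul x s) = s -> mul x (mul s x) = x -> x = star s) /\
  (forall s, mul one s = s /\ mul s one = s) /\
  (forall s, mul zero s = zero /\ mul s zero = zero) /\
  (exists f : T -> nat, forall x y, f x = f y -> x = y).

Section Poset.
Variable P : T -> Prop.
Variable le : T -> T -> Prop.

Definition is_lub_in (x y j : T) : Prop :=
  P j /\ le x j /\ le y j /\ forall u, P u -> le x u -> le y u -> le j u.
Definition is_glb_in (x y m : T) : Prop :=
  P m /\ le m x /\ le m y /\ forall u, P u -> le u x -> le u y -> le u m.

Definition boolean_algebra_on : Prop :=
  exists bot top, P bot /\ P top /\
  (forall x, P x -> le bot x /\ le x top) /\
  (forall x y, P x -> P y -> exists j, is_lub_in x y j) /\
  (forall x y, P x -> P y -> exists m, is_glb_in x y m) /\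
  (forall x y z yz m a b c, P x -> P y -> P z ->
     is_lub_in y z yz -> is_glb_in x yz m ->
     is_glb_in x y a -> is_glb_in x z b -> is_lub_in a b c -> m = c) /\
  (forall x, P x -> exists y, P y /\ is_glb_in x y bot /\ is_lub_in x y top).
End Poset.

Definition boolean_inverse_monoid : Prop :=
  inverse_monoid_with_zero /\
  (forall A, compatible_list A -> exists j, is_join A j) /\
  (forall A j s, compatible_list A -> is_join A j ->
     is_join (map (mul s) A) (mul s j) /\
     is_join (map (fun a => mul a s) A) (mul j s)) /\
  boolean_algebra_on idem nat_le.

Definition J (s e : T) : Prop := idem e /\ mul s e = e.

Definition is_cover (Z : list T) (W : T -> Prop) : Prop :=
  forall w, W w -> w <> zero -> exists z, In z Z /\ mul z w <> zero.

Definition condH : Prop :=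
  forall s, exists C : list T, (forall c, In c C -> J s c) /\ is_cover C (J s).

Definition is_e (s e : T) : Prop :=
  exists C : list T, (forall c, In c C -> J s c) /\ is_cover C (J s) /\ is_join C e.

End BIM.

(* Main.v *)
Require Import Defs.
From Stdlib Require Import List Classical.

Theorem mainTheorem6 (T : Type) (mul : T -> T -> T) (star : T -> T) (one zero : T)
  (HB : boolean_inverse_monoid mul star one zero)
  (HH : condH mul zero)
  (s t est ets : T)
  (Hst : is_e mul star zero (mul s t) est)
  (Hts : is_e mul star zero (mul t s) ets) :
  mul (mul (star s) est) s = ets.
Proof.
  destruct HB as [[A [Reg [Uniq [One [Zero _]]]]] [_ [Dist BA]]].
  unfold idem, nat_le in *.
  assert (SS : forall x, star (star x) = x).
  { intro x. symmetry. apply Uniq; apply Reg. }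
  assert (IS : forall e, mul e e = e -> star e = e).
  { intros e He. symmetry. apply Uniq; rewrite He; exact He. }
  assert (Ir : forall x e, mul e e = e -> mul (mul x e) e = mul x e).
  { intros x e He. rewrite <- A, He. reflexivity. }
  assert (RegL : forall a, mul (mul a (star a)) a = a /\ mul (mul (star a) a) (star a) = star a).
  { intro a. rewrite <- !A. apply Reg. }
  assert (RegP : forall y a, mul (mul (mul y a) (star a)) a = mul y a /\ mul (mul (mul y (star a)) a) (star a) = mul y (star a)).
  { intros y a. rewrite <- !A. rewrite (proj1 (Reg a)), (proj2 (Reg a)). auto. }
  assert (EFi : forall e f, mul e e = e -> mul f f = f -> mul (mul e f) (mul e f) = mul e f).
  { intros e f He Hf.
    assert (Hx : mul (mul f (star (mul e f))) e = star (mul e f)).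
    { apply Uniq.
      - repeat rewrite A. rewrite (Ir _ f Hf), (Ir _ e He).
        pose proof (proj1 (RegL (mul e f))). rewrite !A in H. exact H.
      - repeat rewrite A. rewrite (Ir _ f Hf), (Ir _ e He).
        pose proof (proj2 (RegP f (mul e f))). rewrite !A in H. rewrite H. reflexivity. }
    assert (Hxi : mul (star (mul e f)) (star (mul e f)) = star (mul e f)).
    { transitivity (mul (mul (mul f (star (mul e f))) e) (mul (mul f (star (mul e f))) e)).
      { rewrite Hx. reflexivity. }
      repeat rewrite A.
      pose proof (proj2 (RegP f (mul e f))). rewrite !A in H. rewrite H. exact Hx. }
    rewrite <- (SS (mul e f)). rewrite (IS _ Hxi). exact Hxi. }
  assert (Comm : forall e f, mul e e = e -> mul f f = f -> mul e f = mul f e).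
  { intros e f He Hf.
    pose proof (EFi e f He Hf) as Hefi. pose proof (EFi f e Hf He) as Hfei.
    rewrite <- (IS _ Hefi). apply eq_sym. apply Uniq.
    - repeat rewrite A. rewrite (Ir _ f Hf), (Ir _ e He). rewrite !A in Hefi. exact Hefi.
    - repeat rewrite A. rewrite (Ir _ e He), (Ir _ f Hf). rewrite !A in Hfei. exact Hfei. }
  assert (IdL : forall x, mul (mul x (star x)) (mul x (star x)) = mul x (star x)).
  { intro x. rewrite A, (proj1 (RegL x)). reflexivity. }
  assert (IdR : forall x, mul (mul (star x) x) (mul (star x) x) = mul (star x) x).
  { intro x. rewrite A, (proj2 (RegL x)). reflexivity. }
  assert (SM : forall a b, star (mul a b) = mul (star b) (star a)).
  { intros a b. symmetry. apply Uniq.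
    - transitivity (mul (mul a (mul (mul b (star b)) (mul (star a) a))) b).
      { repeat rewrite A. reflexivity. }
      rewrite (Comm (mul b (star b)) _ (IdL b) (IdR a)).
      repeat rewrite A. rewrite (proj1 (RegL a)). rewrite (proj1 (RegP a b)). reflexivity.
    - transitivity (mul (mul (star b) (mul (mul (star a) a) (mul b (star b)))) (star a)).
      { repeat rewrite A. reflexivity. }
      rewrite (Comm (mul (star a) a) _ (IdR a) (IdL b)).
      repeat rewrite A. rewrite (proj2 (RegL b)). rewrite (proj2 (RegP (star b) a)). reflexivity. }
  assert (Anti : forall x y, x = mul y (mul (star x) x) -> y = mul x (mul (star y) y) -> x = y).
  { intros x y Hx Hy.
    assert (Hy2 : y = mul (mul y (mul (star x) x)) (mul (star y) y)) by (rewrite <- Hx; exact Hy).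
    rewrite <- A, (Comm _ _ (IdR x) (IdR y)), A in Hy2.
    rewrite Hx. rewrite Hy2 at 1. rewrite <- A, (IdR x). symmetry. exact Hy2. }
  assert (LeI : forall x y, mul x x = x -> (x = mul y (mul (star x) x) <-> x = mul y x)).
  { intros x y Hx. rewrite (IS x Hx), Hx. tauto. }
  destruct BA as [bot [top [Pb [Pt [Hbt [Hlub [Hglb [Hdis Hcompl]]]]]]]].
  assert (Glb : forall p q, mul p p = p -> mul q q = q ->
     is_glb_in (fun e => mul e e = e) (fun x y => x = mul y (mul (star x) x)) p q (mul p q)).
  { intros p q Hp Hq. pose proof (EFi p q Hp Hq) as Hpq.
    split; [exact Hpq|]. split; [|split].
    - apply LeI; auto. rewrite A, Hp. reflexivity.
    - apply LeI; auto. rewrite (Comm p q Hp Hq), A, Hq. reflexivity.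
    - intros w Hw H1 H2. apply LeI in H1; auto. apply LeI in H2; auto. apply LeI; auto.
      rewrite <- A, <- H2. exact H1. }
  assert (Emax : forall u e, is_e mul star zero u e -> mul e e = e /\ mul u e = e /\
            (forall x, mul x x = x -> mul u x = x -> mul e x = x)).
  { intros u e [C [HC [Hcov [Hj1 Hj2]]]]. unfold is_cover, J, nat_le, idem in *.
    assert (He : mul e e = e).
    { assert (H1 : e = mul one (mul (star e) e)).
      { apply Hj2. intros c Hc. destruct (HC c Hc) as [Hci _].
        rewrite (proj1 (One _)), (IS c Hci), Hci. reflexivity. }
      rewrite (proj1 (One _)) in H1. rewrite H1. apply IdR. }
    assert (Hce : forall c, In c C -> mul e c = c).
    { intros c Hc. destruct (HC c Hc) as [Hci _]. symmetry. apply LeI; auto. }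
    assert (Hue : mul u e = e).
    { assert (Hcomp : compatible_list mul star C).
      { intros a b Ha Hb. destruct (HC a Ha) as [Hai _]. destruct (HC b Hb) as [Hbi _].
        unfold compatible, idem. rewrite (IS a Hai), (IS b Hbi). split; apply EFi; auto. }
      destruct (Dist C e u Hcomp (conj Hj1 Hj2)) as [[Hk1 Hk2] _].
      assert (Hmap : map (mul u) C = C).
      { rewrite <- (map_id C) at 2. apply map_ext_in. intros c Hc. apply (proj2 (HC c Hc)). }
      rewrite Hmap in Hk1, Hk2. apply Anti.
      - apply Hk2. exact Hj1.
      - apply Hj2. exact Hk1. }
    split; [exact He|]. split; [exact Hue|].
    intros x Hx Hux.
    destruct (Hcompl e He) as [y [Hy [Hg Hl]]].
    destruct Hg as [_ [_ [_ Hgu]]].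
    assert (Hey0 : mul e y = zero).
    { destruct (Glb e y He Hy) as [_ [l1 [l2 _]]].
      pose proof (Hgu (mul e y) (EFi e y He Hy) l1 l2) as H1.
      apply LeI in H1; [|apply EFi; auto].
      pose proof (proj1 (Hbt zero (proj1 (Zero zero)))) as H2.
      rewrite (proj1 (Zero _)) in H2. rewrite H1, H2. apply Zero. }
    assert (Hxy0 : mul x y = zero).
    { apply NNPP; intro Hne.
      assert (Hxu : mul u (mul x y) = mul x y) by (rewrite A, Hux; reflexivity).
      destruct (Hcov (mul x y) (conj (EFi x y Hx Hy) Hxu) Hne) as [c [Hc Hcne]].
      apply Hcne. destruct (HC c Hc) as [Hci _].
      transitivity (mul (mul c x) (mul e y)).
      { rewrite (A (mul c x) e y), <- (A c x e), (Comm x e Hx He), (A c e x), (Comm c e Hci He), (Hce c Hc), A. reflexivity. }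
      rewrite Hey0. apply Zero. }
    assert (Hxe : x = mul x e).
    { apply (Hdis x e y top x (mul x e) zero (mul x e) Hx He Hy Hl).
      - split; [exact Hx|]. split; [apply LeI; auto|]. split; [exact (proj2 (Hbt x Hx))|]. auto.
      - apply Glb; auto.
      - rewrite <- Hxy0. apply Glb; auto.
      - split; [apply EFi; auto|]. split; [apply LeI; [apply EFi; auto|]; symmetry; apply EFi; auto|].
        split; [|auto]. rewrite (proj2 (Zero (star zero))). symmetry. apply Zero. }
    rewrite (Comm e x He Hx). symmetry. exact Hxe. }
  destruct (Emax _ _ Hst) as [He [Hue Hme]].
  destruct (Emax _ _ Hts) as [Hf [Huf Hmf]].
  clear Emax Glb Hcompl Hdis Hglb Hlub Hbt Pb Pt Hst Hts Dist HH.
  set (e := est) in *. set (f := ets) in *.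
  assert (E1 : e = mul (mul e (star t)) (star s)).
  { rewrite <- (IS e He) at 1. rewrite <- Hue at 1. rewrite SM, SM, (IS e He), A. reflexivity. }
  assert (E2 : mul (mul s (star s)) e = e).
  { rewrite (Comm _ _ (IdL s) He). rewrite E1 at 1. rewrite A, (proj2 (RegP _ s)). symmetry. exact E1. }
  assert (SSe : forall y, mul (mul (mul y s) (star s)) e = mul y e).
  { intro y. rewrite <- !A, (A s (star s) e), E2. reflexivity. }
  assert (E4 : e = mul (mul (mul (mul (mul e (star t)) (star s)) s) t) e).
  { rewrite <- E1. rewrite <- !A, (A s t e), Hue, He. reflexivity. }
  assert (TE : mul (mul (mul t e) (star t)) t = mul t e).
  { rewrite <- !A, (Comm e _ He (IdR t)), !A, (proj1 (RegL t)). reflexivity. }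
  assert (Hk : mul (mul (mul t e) (star t)) (mul (mul t e) (star t)) = mul (mul t e) (star t)).
  { rewrite !A, TE, (Ir _ e He). reflexivity. }
  assert (Km : mul (mul t e) (star t) = mul (mul (mul (mul t e) (star t)) (mul (star s) s)) (mul (mul t e) (star t))).
  { rewrite E4 at 1. rewrite !A. reflexivity. }
  rewrite (Comm _ _ Hk (IdR s)), <- (A (mul (star s) s) _ _), Hk in Km.
  assert (TE2 : mul t e = mul (mul (mul t e) (star t)) (mul t e)).
  { rewrite A, TE, (Ir _ e He). reflexivity. }
  assert (E3 : mul (mul (mul (star s) s) t) e = mul t e).
  { rewrite <- A. rewrite TE2. rewrite A, <- Km. reflexivity. }
  assert (Hg : mul (mul (mul (star s) e) s) (mul (mul (star s) e) s) = mul (mul (star s) e) s).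
  { rewrite !A, SSe, (Ir _ e He). reflexivity. }
  assert (Htg : mul (mul t s) (mul (mul (star s) e) s) = mul (mul (star s) e) s).
  { rewrite !A, SSe, <- E3. rewrite <- (A (mul (star s) s) t e), <- (A (star s) s (mul t e)), (A s t e), Hue. reflexivity. }
  pose proof (Hmf _ Hg Htg) as Hfg.
  assert (F1 : f = mul (mul f (star s)) (star t)).
  { rewrite <- (IS f Hf) at 1. rewrite <- Huf at 1. rewrite SM, SM, (IS f Hf), A. reflexivity. }
  assert (F4 : f = mul (mul (mul (mul (mul f (star s)) (star t)) t) s) f).
  { rewrite <- F1. rewrite <- !A, (A t s f), Huf, Hf. reflexivity. }
  assert (Hk' : mul (mul (mul (mul (star s) (star t)) t) s) (mul (mul (mul (star s) (star t)) t) s)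
           = mul (mul (mul (star s) (star t)) t) s).
  { pose proof (IdR (mul t s)) as H. rewrite SM in H. rewrite !A in H. rewrite !A. exact H. }
  assert (F5 : f = mul (mul f (mul (mul (mul (star s) (star t)) t) s)) f).
  { rewrite F4 at 1. rewrite !A. reflexivity. }
  rewrite (Comm f _ Hf Hk'), <- (A (mul (mul (mul (star s) (star t)) t) s) f f), Hf in F5.
  assert (Fs : mul f (mul (star s) s) = f).
  { rewrite F5 at 1. rewrite (Comm _ f Hk' Hf). rewrite <- A.
    replace (mul (mul (mul (mul (star s) (star t)) t) s) (mul (star s) s))
      with (mul (mul (mul (star s) (star t)) t) s) by (rewrite A, (proj1 (RegP _ s)); reflexivity).
    rewrite <- (Comm _ f Hk' Hf). symmetry. exact F5. }
  assert (SF : mul (mul (mul s f) (star s)) s = mul s f).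
  { rewrite <- !A, Fs. reflexivity. }
  assert (Hh : mul (mul (mul s f) (star s)) (mul (mul s f) (star s)) = mul (mul s f) (star s)).
  { rewrite !A, SF, (Ir _ f Hf). reflexivity. }
  assert (Hth : mul (mul s t) (mul (mul s f) (star s)) = mul (mul s f) (star s)).
  { rewrite !A. rewrite <- (A (mul s t) s f), <- (A s t (mul s f)), (A t s f), Huf. reflexivity. }
  pose proof (Hme _ Hh Hth) as Heh.
  assert (X2 : mul (mul (star s) (mul (mul s f) (star s))) s = f).
  { rewrite !A. rewrite <- (A (mul (mul (star s) s) f) (star s) s), <- (A (mul (star s) s) f (mul (star s) s)), Fs, (Comm _ f (IdR s) Hf), Fs. reflexivity. }
  assert (X1 : mul (mul (star s) (mul e (mul (mul s f) (star s)))) s = mul (mul (mul (star s) e) s) f).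
  { rewrite !A. rewrite <- (A _ (star s) s), <- (A _ f (mul (star s) s)), Fs. reflexivity. }
  rewrite <- X2 at 1. rewrite <- Heh, X1, (Comm _ f Hg Hf), Hfg. reflexivity.
Qed.
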